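(* In the setup described in the context, assume the Levi-Civita connection of $\tilde g$ is locally flat ($\tilde R=0$). Let $x\in T_pM$ induce a $Q$-basis, and let $\psi=\angle(x,Q^2x)$ be the $g$-angle. Then $$r(x)=r(Qx)=r(Q^2x)=r(Q^3x)=\frac{\cos\psi}{8}(3\tau^*+\tau)+\frac18(3\tau+\tau^* ).$$
   Context: Let $M$ be a 3-dimensional smooth manifold. Fix a coordinate chart $(x^1,x^2,x^3)$ with coordinate vector fields $\partial_i$. Structures: - $g$ is a Riemannian metric with $g(\partial_1,\partial_1)=g(\partial_2,\partial_2)=A$, $g(\partial_3,\partial_3)=B$ and $g(\partial_i,\partial_j)=0$ for $i\ne j$. Here $A,B$ are smooth positive functions. - $Q$ is the $(1,1)$-tensor field with $Q\partial_1=\partial_2$, $Q\partial_2=-\partial_1$, $Q\partial_3=\partial_3$. - $P=Q^2$ and $\tilde g(x,y)=g(x,Py)$. Curvature: - $\nabla$ and $\tilde\nabla$ are the Levi-Civita connections of $g$ and $\tilde g$, with curvatures $R$ and $\tilde R$. - $R(x,y)z=\nabla_x\nabla_yz-\nabla_y\nabla_xz-\nabla_{[x,y]}z$ and $R(x,y,z,t)=g(R(x,y)z,t)$. - $\rho(y,z)=g^{ij}R(e_i,y,z,e_j)$, $\tau=g^{ij}\rho_{ij}$ and $\tau^*=\tilde g^{ij}\rho_{ij}$. - $r(x)=\rho(x,x)/g(x,x)$. Angles and $Q$-bases: - The $g$-angle is defined by $\cos\angle(u,v)=g(u,v)/\sqrt{g(u,u)g(v,v)}$. - A vector $x$ induces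 a $Q$-basis if $\{x,Qx,Q^2x\}$ is a basis of $T_pM$. *)

(* Defs.v *)
From Stdlib Require Import Reals List.
From Coquelicot Require Import Coquelicot.
Open Scope R_scope.

Inductive idx := I1 | I2 | I3.

Definition sum3 (f : idx -> R) : R := f I1 + f I2 + f I3.
Definition nxt (i : idx) : idx := match i with I1 => I2 | I2 => I3 | I3 => I1 end.

Definition pt : Type := ((R * R) * R)%type.

Definition shift (p : pt) (i : idx) (t : R) : pt :=
  match i with
  | I1 => (fst (fst p) + t, snd (fst p), snd p)
  | I2 => (fst (fst p), snd (fst p) + t, snd p)
  | I3 => (fst (fst p), snd (fst p), snd p + t)
  end.

Definition pd (i : idx) (f : pt -> R) (p : pt) : R :=
  Derive (fun t => f (shift p i t)) 0.

Fixpoint ipd (l : list idx) (f : pt -> R) : pt -> R :=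
  match l with nil => f | i :: l' => pd i (ipd l' f) end.

Definition smooth_on (U : pt -> Prop) (f : pt -> R) : Prop :=
  forall (l : list idx) (p : pt), U p ->
    (forall i, ex_derive (fun t => ipd l f (shift p i t)) 0) /\
    continuous (ipd l f) p.

(** A (pseudo-)metric / symmetric 2-tensor field in coordinates: G i j p = G(d_i,d_j)(p). *)
Definition mfield : Type := idx -> idx -> pt -> R.

(** Inverse of a 3x3 matrix (adjugate / determinant). *)
Definition det3 (m : idx -> idx -> R) : R :=
  sum3 (fun j => m I1 j * (m I2 (nxt j) * m I3 (nxt (nxt j))
                           - m I2 (nxt (nxt j)) * m I3 (nxt j))).
Definition inv3 (m : idx -> idx -> R) (i j : idx) : R :=
  (m (nxt j) (nxt i) * m (nxt (nxt j)) (nxt (nxt i))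
   - m (nxt j) (nxt (nxt i)) * m (nxt (nxt j)) (nxt i)) / det3 m.

Definition ginv (G : mfield) (i j : idx) (p : pt) : R := inv3 (fun a b => G a b p) i j.

(** Christoffel symbols of the Levi-Civita connection of G:
    nabla_{d_i} d_j = sum_k Gamma G k i j d_k. *)
Definition Gamma (G : mfield) (k i j : idx) (p : pt) : R :=
  / 2 * sum3 (fun l => ginv G k l p *
     (pd i (G j l) p + pd j (G i l) p - pd l (G i j) p)).

(** Curvature: R(d_i,d_j) d_k = sum_l Riem G l i j k d_l,
    with R(x,y)z = nabla_x nabla_y z - nabla_y nabla_x z - nabla_[x,y] z. *)
Definition Riem (G : mfield) (l i j k : idx) (p : pt) : R :=
  pd i (Gamma G l j k) p - pd j (Gamma G l i k) p
  + sum3 (fun m => Gamma G m j k p * Gamma G l i m p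
                   - Gamma G m i k p * Gamma G l j m p).

Definition Riem4 (G : mfield) (i j k t : idx) (p : pt) : R :=
  sum3 (fun l => Riem G l i j k p * G l t p).

Definition Ricci (G : mfield) : mfield :=
  fun y z p => sum3 (fun i => sum3 (fun j => ginv G i j p * Riem4 G i y z j p)).

Definition gmetric (A B : pt -> R) : mfield :=
  fun i j p => match i, j with
               | I1, I1 => A p | I2, I2 => A p | I3, I3 => B p | _, _ => 0 end.

(** Components of Q: Q d_j = sum_k Qc k j d_k. *)
Definition Qc (k j : idx) : R :=
  match k, j with
  | I2, I1 => 1 | I1, I2 => -1 | I3, I3 => 1 | _, _ => 0 end.

Definition Pc (k j : idx) : R := sum3 (fun m => Qc k m * Qc m j).

Definition gtilde (A B : pt -> R) : mfield :=
  fun i j p => sum3 (fun k => gmetric A B i k p * Pc k j).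

Definition vec : Type := idx -> R.
Definition Qv (x : vec) : vec := fun k => sum3 (fun j => Qc k j * x j).

Definition vzero : vec := fun _ => 0.
Definition lincomb3 (a b c : R) (u v w : vec) : vec := fun k => a * u k + b * v k + c * w k.
Definition is_basis3 (u v w : vec) : Prop :=
  (forall a b c, lincomb3 a b c u v w = vzero -> a = 0 /\ b = 0 /\ c = 0) /\
  (forall y : vec, exists a b c, y = lincomb3 a b c u v w).

Definition induces_Qbasis (x : vec) : Prop := is_basis3 x (Qv x) (Qv (Qv x)).

Definition tval (G : mfield) (p : pt) (x y : vec) : R :=
  sum3 (fun i => sum3 (fun j => G i j p * x i * y j)).

Definition tau (A B : pt -> R) (p : pt) : R :=
  sum3 (fun i => sum3 (fun j => ginv (gmetric A B) i j p * Ricci (gmetric A B) i j p)).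
Definition tau_star (A B : pt -> R) (p : pt) : R :=
  sum3 (fun i => sum3 (fun j => ginv (gtilde A B) i j p * Ricci (gmetric A B) i j p)).

Definition rfun (A B : pt -> R) (p : pt) (x : vec) : R :=
  tval (Ricci (gmetric A B)) p x x / tval (gmetric A B) p x x.

Definition gangle (A B : pt -> R) (p : pt) (u v : vec) : R :=
  acos (tval (gmetric A B) p u v /
        sqrt (tval (gmetric A B) p u u * tval (gmetric A B) p v v)).

(* Main.v *)
Require Import Defs.
From Stdlib Require Import Reals Lra.
From Coquelicot Require Import Coquelicot.
Open Scope R_scope.
From Stdlib Require Import FunctionalExtensionality.

Section S.
Variables A B : pt -> R.
Let g := gmetric A B.
Let gt := gtilde A B.

Definition eps (i : idx) : R := match i with I3 => 1 | _ => -1 end.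

Lemma pd0 i p : pd i (fun _ => 0) p = 0.
Proof. unfold pd. apply Derive_const. Qed.

Lemma gt_eq i j q : gtilde A B i j q = eps j * gmetric A B i j q.
Proof. destruct i, j; unfold gtilde, gmetric, Pc, Qc, sum3, eps; cbv beta iota; unfold Rdiv; ring. Qed.

Lemma pd_gt i j k q : pd i (gtilde A B j k) q = eps k * pd i (gmetric A B j k) q.
Proof. unfold pd. rewrite <- Derive_scal. apply Derive_ext. intro t. apply gt_eq. Qed.

Lemma pd_g i j k q : pd i (gmetric A B j k) q =
  match j, k with I1, I1 => pd i A q | I2, I2 => pd i A q | I3, I3 => pd i B q | _, _ => 0 end.
Proof. destruct j, k; try reflexivity; apply pd0. Qed.

Lemma det_t q : det3 (fun a b => gtilde A B a b q) = det3 (fun a b => gmetric A B a b q).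
Proof. unfold det3; unfold gtilde, gmetric, Pc, Qc, sum3, nxt; cbv beta iota; unfold Rdiv; ring. Qed.

Lemma ginv_t i j q : ginv (gtilde A B) i j q = eps i * ginv (gmetric A B) i j q.
Proof. unfold ginv, inv3. rewrite det_t. generalize (det3 (fun a b => gmetric A B a b q)); intro d. destruct i, j; unfold gtilde, gmetric, Pc, Qc, sum3, nxt, eps; cbv beta iota; unfold Rdiv; ring. Qed.

Lemma ginv12 q : ginv (gmetric A B) I1 I2 q = 0. Proof. unfold ginv, inv3; unfold gmetric, nxt; cbv beta iota; unfold Rdiv; ring. Qed.
Lemma ginv13 q : ginv (gmetric A B) I1 I3 q = 0. Proof. unfold ginv, inv3; unfold gmetric, nxt; cbv beta iota; unfold Rdiv; ring. Qed.
Lemma ginv21 q : ginv (gmetric A B) I2 I1 q = 0. Proof. unfold ginv, inv3; unfold gmetric, nxt; cbv beta iota; unfold Rdiv; ring. Qed.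
Lemma ginv23 q : ginv (gmetric A B) I2 I3 q = 0. Proof. unfold ginv, inv3; unfold gmetric, nxt; cbv beta iota; unfold Rdiv; ring. Qed.
Lemma ginv31 q : ginv (gmetric A B) I3 I1 q = 0. Proof. unfold ginv, inv3; unfold gmetric, nxt; cbv beta iota; unfold Rdiv; ring. Qed.
Lemma ginv32 q : ginv (gmetric A B) I3 I2 q = 0. Proof. unfold ginv, inv3; unfold gmetric, nxt; cbv beta iota; unfold Rdiv; ring. Qed.

Definition sgn (l j k : idx) : R :=
  match l, j, k with
  | I3, I1, I1 => -1 | I3, I2, I2 => -1 | I1, I3, I3 => -1 | I2, I3, I3 => -1 | _, _, _ => 1 end.

Lemma Gt l j k q : Gamma (gtilde A B) l j k q = sgn l j k * Gamma (gmetric A B) l j k q.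
Proof.
  unfold Gamma, sum3. rewrite !ginv_t, !pd_gt, !pd_g.
  destruct l, j, k; cbn [eps sgn];
  rewrite ?ginv12, ?ginv13, ?ginv21, ?ginv23, ?ginv31, ?ginv32; ring.
Qed.

Lemma pdGt i l j k q : pd i (Gamma (gtilde A B) l j k) q = sgn l j k * pd i (Gamma (gmetric A B) l j k) q.
Proof. unfold pd. rewrite <- Derive_scal. apply Derive_ext. intro t. apply Gt. Qed.

Lemma Riem_t l i j k q : Riem (gtilde A B) l i j k q =
  sgn l j k * pd i (Gamma (gmetric A B) l j k) q - sgn l i k * pd j (Gamma (gmetric A B) l i k) q
  + sum3 (fun m => sgn m j k * Gamma (gmetric A B) m j k q * (sgn l i m * Gamma (gmetric A B) l i m q)
                 - sgn m i k * Gamma (gmetric A B) m i k q * (sgn l j m * Gamma (gmetric A B) l j m q)).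
Proof. unfold Riem. rewrite !pdGt. unfold sum3. rewrite !Gt. ring. Qed.

Lemma gm_val i j q : gmetric A B i j q =
  match i, j with I1, I1 => A q | I2, I2 => A q | I3, I3 => B q | _, _ => 0 end.
Proof. destruct i, j; reflexivity. Qed.

Lemma ginv_val i j q : A q <> 0 -> B q <> 0 -> ginv (gmetric A B) i j q =
  match i, j with I1, I1 => / A q | I2, I2 => / A q | I3, I3 => / B q | _, _ => 0 end.
Proof. intros HA HB. unfold ginv, inv3, det3, sum3. destruct i, j; unfold gmetric, nxt; cbv beta iota; field; auto. Qed.

Lemma Ric_contr y z q : A q <> 0 -> B q <> 0 ->
  Ricci (gmetric A B) y z q = sum3 (fun i => Riem (gmetric A B) i i y z q).
Proof.
  intros HA HB. unfold Ricci, Riem4, sum3. rewrite !ginv_val by auto. rewrite !gm_val.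
  cbv beta iota. field; auto.
Qed.

Lemma Gv l j k q : A q <> 0 -> B q <> 0 -> Gamma (gmetric A B) l j k q =
  / 2 * (match l with I3 => / B q | _ => / A q end) *
  (pd j (gmetric A B k l) q + pd k (gmetric A B j l) q - pd l (gmetric A B j k) q).
Proof.
  intros HA HB. unfold Gamma, sum3. rewrite !ginv_val by auto.
  destruct l; cbv beta iota; ring.
Qed.

Lemma G3eq q : Gamma (gmetric A B) I3 I2 I2 q = Gamma (gmetric A B) I3 I1 I1 q.
Proof.
  unfold Gamma, sum3. rewrite !pd_g. rewrite ?ginv12, ?ginv13, ?ginv21, ?ginv23, ?ginv31, ?ginv32.
  cbv beta iota. ring.
Qed.

Lemma pdG3eq i q : pd i (Gamma (gmetric A B) I3 I2 I2) q = pd i (Gamma (gmetric A B) I3 I1 I1) q.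
Proof. unfold pd. apply Derive_ext. intro t. apply G3eq. Qed.


Lemma sub1 X Y : Y = 0 -> X - Y = 0 -> X = 0.
Proof. intros; lra. Qed.
Lemma sub2 X1 Y1 X2 Y2 : Y1 = 0 -> Y2 = 0 -> X1 - Y1 - (X2 - Y2) = 0 -> X1 = X2.
Proof. intros; lra. Qed.

Lemma Ric_off y z p : A p <> 0 -> B p <> 0 ->
  (forall l i j k, Riem (gtilde A B) l i j k p = 0) -> y <> z ->
  Ricci (gmetric A B) y z p = 0.
Proof.
  intros HA HB H Hyz. rewrite Ric_contr by auto.
  assert (H0 : sum3 (fun i => Riem (gtilde A B) i i y z p) = 0) by (unfold sum3; rewrite !H; ring).
  unfold sum3 in H0. rewrite !Riem_t in H0. unfold sum3 in H0.
  refine (sub1 _ _ H0 _). unfold sum3, Riem, sum3.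
  destruct y, z; try (exfalso; apply Hyz; reflexivity);
  rewrite !Gv by auto; rewrite !pd_g; cbv beta iota delta [sgn]; field; auto.
Qed.

Lemma Ric_diag p : A p <> 0 -> B p <> 0 ->
  (forall l i j k, Riem (gtilde A B) l i j k p = 0) ->
  Ricci (gmetric A B) I1 I1 p = Ricci (gmetric A B) I2 I2 p.
Proof.
  intros HA HB H. rewrite !Ric_contr by auto.
  assert (H1 : sum3 (fun i => Riem (gtilde A B) i i I1 I1 p) = 0) by (unfold sum3; rewrite !H; ring).
  assert (H2 : sum3 (fun i => Riem (gtilde A B) i i I2 I2 p) = 0) by (unfold sum3; rewrite !H; ring).
  unfold sum3 in H1, H2. rewrite !Riem_t in H1, H2. unfold sum3 in H1, H2.
  refine (sub2 _ _ _ _ H1 H2 _). unfold sum3, Riem, sum3.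
  rewrite !pdG3eq.
  rewrite !Gv by auto; rewrite !pd_g; cbv beta iota delta [sgn]; field; auto.
Qed.

End S.
Lemma Qv1 x : Qv x I1 = - x I2. Proof. unfold Qv, sum3, Qc; ring. Qed.
Lemma Qv2 x : Qv x I2 = x I1. Proof. unfold Qv, sum3, Qc; ring. Qed.
Lemma Qv3 x : Qv x I3 = x I3. Proof. unfold Qv, sum3, Qc; ring. Qed.

Theorem proposition5p6 (U : pt -> Prop) (A B : pt -> R) :
  open U ->
  smooth_on U A -> smooth_on U B ->
  (forall q, U q -> 0 < A q) -> (forall q, U q -> 0 < B q) ->
  (forall q, U q -> forall l i j k, Riem (gtilde A B) l i j k q = 0) ->
  forall (p : pt) (x : vec), U p -> induces_Qbasis x ->
  let psi := gangle A B p x (Qv (Qv x)) in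
  rfun A B p x = rfun A B p (Qv x) /\
  rfun A B p (Qv x) = rfun A B p (Qv (Qv x)) /\
  rfun A B p (Qv (Qv x)) = rfun A B p (Qv (Qv (Qv x))) /\
  rfun A B p (Qv (Qv (Qv x))) =
    cos psi / 8 * (3 * tau_star A B p + tau A B p) + / 8 * (3 * tau A B p + tau_star A B p).
Proof.
  intros _ _ _ HA HB HR p x Hp [Hind _] psi.
  specialize (HA p Hp). specialize (HB p Hp). specialize (HR p Hp).
  assert (HA' : A p <> 0) by lra. assert (HB' : B p <> 0) by lra.
  assert (r12 : Ricci (gmetric A B) I1 I2 p = 0) by (apply Ric_off; auto; discriminate).
  assert (r13 : Ricci (gmetric A B) I1 I3 p = 0) by (apply Ric_off; auto; discriminate).
  assert (r21 : Ricci (gmetric A B) I2 I1 p = 0) by (apply Ric_off; auto; discriminate).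
  assert (r23 : Ricci (gmetric A B) I2 I3 p = 0) by (apply Ric_off; auto; discriminate).
  assert (r31 : Ricci (gmetric A B) I3 I1 p = 0) by (apply Ric_off; auto; discriminate).
  assert (r32 : Ricci (gmetric A B) I3 I2 p = 0) by (apply Ric_off; auto; discriminate).
  assert (r22 : Ricci (gmetric A B) I2 I2 p = Ricci (gmetric A B) I1 I1 p) by (symmetry; apply Ric_diag; auto).
  set (u := Ricci (gmetric A B) I1 I1 p) in *.
  set (v := Ricci (gmetric A B) I3 I3 p) in *.
  assert (Hrv : forall w : vec, rfun A B p w =
     (u * (w I1 * w I1 + w I2 * w I2) + v * (w I3 * w I3)) /
     (A p * (w I1 * w I1 + w I2 * w I2) + B p * (w I3 * w I3))).
  { intro w. unfold rfun, tval, sum3. rewrite r12, r13, r21, r23, r31, r32, r22.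
    fold u v. rewrite !gm_val. cbv beta iota. f_equal; ring. }
  assert (Hx : x I1 * x I1 + x I2 * x I2 + x I3 * x I3 <> 0).
  { intro E. assert (E1 : x I1 = 0) by nra. assert (E2 : x I2 = 0) by nra. assert (E3 : x I3 = 0) by nra.
    destruct (Hind 1 0 0) as [C _]; [|lra].
    apply functional_extensionality. intro k. unfold lincomb3, vzero.
    destruct k; rewrite ?E1, ?E2, ?E3; ring. }
  assert (HN : 0 < A p * (x I1 * x I1 + x I2 * x I2) + B p * (x I3 * x I3)).
  { assert (0 <= x I1 * x I1) by nra. assert (0 <= x I2 * x I2) by nra. assert (0 <= x I3 * x I3) by nra.
    destruct (Rlt_or_le 0 (x I1 * x I1 + x I2 * x I2)).
    - assert (0 <= B p * (x I3 * x I3)) by (apply Rmult_le_pos; lra).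
      assert (0 < A p * (x I1 * x I1 + x I2 * x I2)) by (apply Rmult_lt_0_compat; lra). lra.
    - assert (0 < x I3 * x I3) by lra.
      assert (0 <= A p * (x I1 * x I1 + x I2 * x I2)) by (apply Rmult_le_pos; lra).
      assert (0 < B p * (x I3 * x I3)) by (apply Rmult_lt_0_compat; lra). lra. }
  assert (Hcos : cos psi = (- A p * (x I1 * x I1 + x I2 * x I2) + B p * (x I3 * x I3)) /
                   (A p * (x I1 * x I1 + x I2 * x I2) + B p * (x I3 * x I3))).
  { unfold psi, gangle, tval, sum3. repeat rewrite ?Qv1, ?Qv2, ?Qv3. rewrite !gm_val. cbv beta iota.
    match goal with |- cos (acos (?a / sqrt (?b * ?c))) = _ =>
      replace (sqrt (b * c)) with (A p * (x I1 * x I1 + x I2 * x I2) + B p * (x I3 * x I3)) end.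
    2:{ rewrite <- (sqrt_square (A p * (x I1 * x I1 + x I2 * x I2) + B p * (x I3 * x I3))) by lra. f_equal. ring. }
    rewrite cos_acos.
    - f_equal. ring.
    - assert (0 <= x I1 * x I1) by nra. assert (0 <= x I2 * x I2) by nra. assert (0 <= x I3 * x I3) by nra.
      assert (0 <= A p * (x I1 * x I1 + x I2 * x I2)) by (apply Rmult_le_pos; lra).
      assert (0 <= B p * (x I3 * x I3)) by (apply Rmult_le_pos; lra).
      set (N := A p * (x I1 * x I1 + x I2 * x I2) + B p * (x I3 * x I3)) in *.
      split; apply (Rmult_le_reg_r N); auto; unfold Rdiv; rewrite Rmult_assoc, Rinv_l by lra;
      unfold N; ring_simplify; lra. }
  assert (Ht : tau A B p = 2 * u / A p + v / B p).
  { unfold tau, sum3. rewrite !ginv_val by auto. cbv beta iota.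
    rewrite r12, r13, r21, r23, r31, r32, r22. fold u v. field; auto. }
  assert (Hts : tau_star A B p = - 2 * u / A p + v / B p).
  { unfold tau_star, sum3. rewrite !ginv_t. rewrite !ginv_val by auto. cbv beta iota delta [eps].
    rewrite r12, r13, r21, r23, r31, r32, r22. fold u v. field; auto. }
  rewrite !Hrv. repeat rewrite ?Qv1, ?Qv2, ?Qv3. rewrite Hcos, Ht, Hts.
  set (N := A p * (x I1 * x I1 + x I2 * x I2) + B p * (x I3 * x I3)) in *.
  assert (E1 : A p * (- x I2 * - x I2 + x I1 * x I1) + B p * (x I3 * x I3) = N) by (unfold N; ring).
  assert (E2 : A p * (- x I1 * - x I1 + - x I2 * - x I2) + B p * (x I3 * x I3) = N) by (unfold N; ring).
  assert (E3 : A p * (- - x I2 * - - x I2 + - x I1 * - x I1) + B p * (x I3 * x I3) = N) by (unfold N; ring).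
  rewrite ?E1, ?E2, ?E3.
  repeat split; [field; lra..|]. unfold N in *. field. repeat split; lra.
Qed.
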